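(* The graph of the 3-dimensional cube (8 vertices, 3-regular) and the graph of the pentagonal prism (10 vertices: two 5-cycles $u_0\cdots u_4$ and $w_0\cdots w_4$ together with the edges $u_iw_i$) are both B-factorizable.
   Context: Let $V$ be a finite set with $|V|$ even. $K=\binom{V}{2}$ is the set of 2-element subsets of $V$. An equal partition of $V$ is an unordered pair $\{H,A\}$ of disjoint subsets with $H\cup A=V$ and $|H|=|A|=|V|/2$; $C=C(V)$ is the set of equal partitions. For $c=\{H,A\}\in C$, $B_c$ is the complete bipartite graph with parts $H$ and $A$. Vectors live in $\mathbb N^{K\cup C}$ with $\mathbb N=\{0,1,2,\dots\}$; $v|_K$ denotes the restriction to coordinates in $K$. For $E\subseteq K$, $\chi_E\in\{0,1\}^K$ is its indicator vector. For $E\subseteq K$ and $c\in C$, $\chi_{E,c}\in\mathbb N^{K\cup C}$ has $K$-components $\chi_E$ and $C$-components equal to the indicator of $c$. $PM(V)=\{\chi_{q,c}: c\in C,\ q\text{ a perfect matching of }B_c\}$. For $\mathcal M\subseteq\mathbb N^{K\cup C}$, $\mathbf N(\mathcal M)$ is the set of finite nonnegative integer combinations of elements of $\mathcal M$, and $\overline{\mathbf N}(\mathcal M)=\{v\in\mathbb N^{K\cup C}: kv\in\mathbf N(\mathcal M)\text{ for some integer }k\ge1\}$. A regular graph $G=(V,E)$ is B-factorizable if every $v\in\overline{\mathbf N}(PM(V))$ with $v|_K=\chi_E$ belongs to $\mathbf N(PM(V))$. *)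

(* Defs.v *)
From HB Require Import structures.
From mathcomp Require Import all_boot.
Set Implicit Arguments. Unset Strict Implicit. Unset Printing Implicit Defensive.

Section BFact.
Variable V : finType.

Definition Kt := {e : {set V} | #|e| == 2}.

Definition is_eqpart (c : {set {set V}}) : bool :=
  [exists H : {set V}, (c == [set H; ~: H]) && (#|H|.*2 == #|V|)].

Definition Ct := {c : {set {set V}} | is_eqpart c}.

Definition vec := {ffun (Kt + Ct)%type -> nat}.

(* e is an edge of the complete bipartite graph B_c *)
Definition bip_edge (c : Ct) (e : Kt) : bool :=
  [forall P in val c, #|val e :&: P| == 1].

Definition is_pm (c : Ct) (q : {set Kt}) : bool :=
  [forall e in q, bip_edge c e] &&
  [forall x : V, #|[set e in q | x \in val e]| == 1].

Definition chiEc (E : {set Kt}) (c : Ct) : vec :=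
  [ffun x => match x with inl e => nat_of_bool (e \in E)
                        | inr d => nat_of_bool (d == c) end].

Definition in_PM (v : vec) : Prop :=
  exists (c : Ct) (q : {set Kt}), is_pm c q /\ v = chiEc q c.

Definition vsum (s : seq vec) : vec := [ffun x => \sum_(w <- s) w x].
Definition vscale (k : nat) (v : vec) : vec := [ffun x => k * v x].

(* N(M): finite nonnegative integer combinations (= finite sums with repetition) *)
Definition Ncomb (M : vec -> Prop) (v : vec) : Prop :=
  exists s : seq vec, (forall w, w \in s -> M w) /\ v = vsum s.

Definition Nbar (M : vec -> Prop) (v : vec) : Prop :=
  exists k : nat, 1 <= k /\ Ncomb M (vscale k v).

Definition regular (E : {set Kt}) : Prop :=
  exists d : nat, forall x : V, #|[set e in E | x \in val e]| = d.

Definition B_factorizable (E : {set Kt}) : Prop :=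
  regular E /\
  forall v : vec, Nbar in_PM v ->
    (forall e : Kt, v (inl e) = nat_of_bool (e \in E)) -> Ncomb in_PM v.

Definition edges_of (r : rel V) : {set Kt} :=
  [set e : Kt | [exists x : V, exists y : V, (val e == [set x; y]) && r x y]].

End BFact.

Definition cubeV := (bool * bool * bool)%type.
Definition cube_adj : rel cubeV := fun x y =>
  (x.1.1 != y.1.1) + (x.1.2 != y.1.2) + (x.2 != y.2) == 1.
Definition cube_edges : {set Kt cubeV} := edges_of cube_adj.

(* pentagonal prism: (false, i) = u_i, (true, i) = w_i *)
Definition prismV := (bool * 'I_5)%type.
Definition prism_adj : rel prismV := fun x y =>
  ((x.1 == y.1) && ((nat_of_ord y.2 == (x.2 + 1) %% 5) || (nat_of_ord x.2 == (y.2 + 1) %% 5)))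
  || ((x.1 != y.1) && (x.2 == y.2)).
Definition prism_edges : {set Kt prismV} := edges_of prism_adj.

(* Main.v *)
From HB Require Import structures.
From Stdlib Require Import Lia.
From mathcomp Require Import all_boot.
Require Import Defs.
Set Implicit Arguments. Unset Strict Implicit. Unset Printing Implicit Defensive.

Lemma card_list (T : finType) (s : seq T) (P : pred T) :
  uniq s -> (forall x, P x -> x \in s) -> #|P| = count P s.
Proof.
move=> us sub.
rewrite -size_filter -(card_uniqP (filter_uniq P us)).
apply: eq_card => x; rewrite mem_filter.
by case Px: (P x) => //=; rewrite (sub x Px).
Qed.

Fixpoint allbits (n : nat) : seq (seq bool) :=
  if n is n'.+1 then [seq true :: b | b <- allbits n'] ++ [seq false :: b | b <- allbits n']
  else [:: [::]].

Lemma allbitsP n b : size b = n -> b \in allbits n.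
Proof.
elim: n b => [|n IH] [|x b] //= [sb].
rewrite mem_cat; case: x.
  by rewrite map_f ?IH.
by rewrite orbC map_f ?IH.
Qed.


Lemma sumB (T : Type) (s : seq T) (P : pred T) : \sum_(x <- s) (P x : nat) = count P s.
Proof. by elim: s => [|x s IH]; rewrite ?big_nil ?big_cons ?IH. Qed.

Lemma sub_in_count (T : Type) (a1 a2 : pred T) s :
  all (fun x => a1 x ==> a2 x) s -> count a1 s <= count a2 s.
Proof.
elim: s => //= x s IH /andP[/implyP h /IH] h'.
case: (a1 x) h => [-> //|] /= _.
by rewrite add0n (leq_trans h') // leq_addl.
Qed.

Lemma sum_eq1 p a (F : nat -> nat) : a < p -> \sum_(j < p) (a == j) * F j = F a.
Proof.
move=> ap; rewrite (bigD1 (Ordinal ap)) //= ?eqxx mul1n big1 ?addn0 // => j.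
by rewrite -val_eqE /= eq_sym => /negbTE ->.
Qed.

Lemma sumN p (s : seq nat) (F : nat -> nat) : all (fun x => x < p) s ->
  \sum_(x <- s) F x = \sum_(j < p) count_mem (j : nat) s * F j.
Proof.
elim: s => [|x s IH] /=; first by rewrite big_nil big1.
case/andP=> xp /IH; rewrite big_cons => ->; rewrite -(sum_eq1 F xp) -big_split /=.
by apply: eq_bigr => j _; rewrite mulnDl.
Qed.

Lemma sum_fin_count (T : finType) (s : seq T) (P : pred T) :
  count P s = \sum_(c | P c) count_mem c s.
Proof.
elim: s => [|x s IH] /=; first by rewrite big1.
rewrite IH big_split /=; congr (_ + _).
case Px: (P x).
  rewrite (bigD1 x) //= ?eqxx big1 // => c /andP[_ /negbTE]; by rewrite eq_sym => ->.
by rewrite big1 // => c Pc; case: eqP => // xc; rewrite xc Pc in Px.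
Qed.

Lemma sum_fin_size (T : finType) (s : seq T) : \sum_c count_mem c s = size s.
Proof. by rewrite -(sum_fin_count s predT) count_predT. Qed.

Lemma vec_decomp (T : finType) (f : T -> nat) n : \sum_t f t = n ->
  exists cs : seq T, size cs = n /\ forall t, f t = count_mem t cs.
Proof.
elim: n f => [|n IH] f sf.
  exists [::]; split => // t; apply/eqP; move/eqP: sf; rewrite sum_nat_eq0.
  by move/forall_inP; apply.
have [t0 ft0] : exists t0, 0 < f t0.
  apply/existsP; apply: contraTT isT => /existsPn H.
  suff : \sum_t f t = 0 by rewrite sf.
  by rewrite big1 // => t _; move: (H t); rewrite lt0n negbK => /eqP.
set f' := fun t => f t - (t == t0).
have ff t : f t = f' t + (t == t0).
  by rewrite /f' subnK //; case: eqP => // ->.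
have : \sum_t f' t = n.
  have s1 : \sum_t ((t == t0) : nat) = 1.
    by rewrite (bigD1 t0) //= eqxx big1 // => t /negbTE ->.
  by move: sf; rewrite (eq_bigr (fun t => f' t + (t == t0))) // big_split /= s1 addn1 => [[]].
case/IH=> cs [sc Hc]; exists (t0 :: cs); split; first by rewrite /= sc.
by move=> t; rewrite ff Hc /= addnC eq_sym.
Qed.

Lemma lift_list (A : Type) (B : eqType) (P : pred A) (f : A -> B) (s : seq B) :
  (forall w, w \in s -> exists x, P x /\ w = f x) -> exists L, all P L /\ s = map f L.
Proof.
elim: s => [|w s IH] Hw; first by exists [::].
case: (Hw w (mem_head _ _)) => x [Px ->].
case: IH => [w' w's|L [HL ->]]; first by apply: Hw; rewrite inE w's orbT.
by exists (x :: L); rewrite /= Px HL.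
Qed.

Lemma sumn_big (T : Type) (s : seq T) (f : T -> nat) : sumn [seq f x | x <- s] = \sum_(x <- s) f x.
Proof. by elim: s => [|x s IH]; rewrite ?big_nil ?big_cons //= IH. Qed.

Lemma all2_zip (S T : eqType) (U : Type) (r : S -> U -> bool) (f : T -> U) (s1 : seq S) (s2 : seq T) l :
  all2 r s1 (map f s2) -> l \in zip s1 s2 -> r l.1 (f l.2).
Proof.
elim: s1 s2 => [|x s1 IH] [|y s2] //= /andP[rxy H]; rewrite inE => /orP[/eqP->|] //.
exact: IH.
Qed.

Section Bridge.
Variable V : finType.
Variable adj : rel V.
Variable Vl : seq V.
Hypothesis HVl : forall x, x \in Vl.
Hypothesis uVl : uniq Vl.
Variable El : seq (V * V).
Variable e0 : Kt V.
Variable x0 : V.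
Let m := size El.
Let a i := (nth (x0, x0) El i).1.
Let b i := (nth (x0, x0) El i).2.
Definition pin (x : V) i := (x == a i) || (x == b i).
Hypothesis HEl1 : all (fun p => (p.1 != p.2) && adj p.1 p.2) El.
Hypothesis HEl2 : forall x y, adj x y ->
  has (fun p => ((p.1 == x) && (p.2 == y)) || ((p.1 == y) && (p.2 == x))) El.
Hypothesis HElcode : forall i, i < m -> find (fun p => pin p.1 i && pin p.2 i) El = i.

Definition Eg := edges_of adj.
Definition code (e : Kt V) : nat := find (fun p => (p.1 \in val e) && (p.2 \in val e)) El.
Definition ed (i : nat) : Kt V := insubd e0 [set a i; b i].

Lemma ab_neq i : i < m -> a i != b i.
Proof. by move=> im; have /andP[] := all_nthP (x0,x0) HEl1 i im. Qed.
Lemma ab_adj i : i < m -> adj (a i) (b i).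
Proof. by move=> im; have /andP[] := all_nthP (x0,x0) HEl1 i im. Qed.

Lemma val_ed i : i < m -> val (ed i) = [set a i; b i].
Proof. by move=> im; rewrite /ed val_insubd cards2 ab_neq. Qed.

Lemma in_ed x i : i < m -> (x \in val (ed i)) = pin x i.
Proof. by move=> im; rewrite val_ed // in_set2. Qed.

Lemma code_ed i : i < m -> code (ed i) = i.
Proof.
move=> im; rewrite /code -{3}(HElcode im); apply: eq_find => p.
by rewrite !in_ed.
Qed.

Lemma ed_in i : i < m -> ed i \in Eg.
Proof.
move=> im; rewrite inE; apply/existsP; exists (a i); apply/existsP; exists (b i).
by rewrite val_ed // eqxx ab_adj.
Qed.

Lemma code_lt e : e \in Eg -> code e < m.
Proof.
rewrite inE => /existsP[x /existsP[y /andP[/eqP ve /HEl2 hp]]].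
rewrite /code -has_find; apply: sub_has hp => p.
by rewrite ve !in_set2 => /orP[]/andP[/eqP-> /eqP->]; rewrite !eqxx ?orbT.
Qed.

Lemma ed_code e : e \in Eg -> ed (code e) = e.
Proof.
move=> eE; have cm := code_lt eE.
have hh : has (fun p => (p.1 \in val e) && (p.2 \in val e)) El by rewrite has_find.
have /andP[ha hb] := nth_find (x0, x0) hh.
apply: val_inj; rewrite val_ed //; apply/eqP.
rewrite eqEcard cards2 ab_neq //; have := valP e; rewrite /= => /eqP->.
by rewrite andbT; apply/subsetP => x; rewrite in_set2 => /orP [] /eqP ->.
Qed.

Lemma ed_inj i j : i < m -> j < m -> ed i = ed j -> i = j.
Proof. by move=> im jm eij; rewrite -(code_ed im) eij code_ed. Qed.

Lemma card_E (R : pred (Kt V)) : (forall e, R e -> e \in Eg) ->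
  #|R| = count (fun i => R (ed i)) (iota 0 m).
Proof.
move=> RE; rewrite (@card_list _ (map ed (iota 0 m))) ?count_map //.
  rewrite map_inj_in_uniq ?iota_uniq // => i j; rewrite !mem_iota /= !add0n.
  exact: ed_inj.
move=> e /RE eE; rewrite -(ed_code eE) map_f // mem_iota /= add0n code_lt //.
Qed.

Variable PMbits : seq (seq bool).
Let p := size PMbits.
Definition PMset (bb : seq bool) : {set Kt V} := [set e | (e \in Eg) && nth false bb (code e)].
Definition PMs := map PMset PMbits.
Definition PMj j := nth set0 PMs j.

Lemma PMjE j : j < p -> PMj j = PMset (nth [::] PMbits j).
Proof. by move=> jp; rewrite /PMj (nth_map [::]). Qed.

Lemma ed_PMset bb i : i < m -> (ed i \in PMset bb) = nth false bb i.
Proof. by move=> im; rewrite inE ed_in // code_ed. Qed.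

Lemma PMset_sub bb : PMset bb \subset Eg.
Proof. by apply/subsetP => e; rewrite inE => /andP[]. Qed.

Lemma PMj_sub j : PMj j \subset Eg.
Proof.
rewrite /PMj; case: (ltnP j (size PMs)) => jp; last by rewrite nth_default // sub0set.
by rewrite (nth_map [::]) ?PMset_sub // -(size_map PMset).
Qed.

Lemma vcard (q : {set Kt V}) x : q \subset Eg ->
  #|[set e in q | x \in val e]| = count (fun i => (ed i \in q) && pin x i) (iota 0 m).
Proof.
move=> qE; rewrite (@card_E (mem [set e in q | x \in val e])).
  by apply: eq_in_count => i; rewrite mem_iota /= add0n => im; rewrite inE in_ed.
move=> e He; have : e \in [set e in q | x \in val e] := He.
by rewrite inE => /andP [H _]; apply: (subsetP qE).
Qed.

Definition vcondB (bb : seq bool) : bool :=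
  all (fun x => count (fun i => nth false bb i && pin x i) (iota 0 m) == 1) Vl.

Hypothesis HC1 : all (fun bb => vcondB bb ==> (bb \in PMbits)) (allbits m).

Lemma pm_in (q : {set Kt V}) : q \subset Eg ->
  [forall x, #|[set e in q | x \in val e]| == 1] -> q \in PMs.
Proof.
move=> qE /forallP vq.
set bb := [seq ed i \in q | i <- iota 0 m].
have nbb i : i < m -> nth false bb i = (ed i \in q).
  by move=> im; rewrite /bb (nth_map 0) ?size_iota // nth_iota.
have : bb \in allbits m by apply: allbitsP; rewrite size_map size_iota.
move/(allP HC1)/implyP => H.
have -> : q = PMset bb.
  apply/setP => e; rewrite inE; case eE: (e \in Eg); last first.
    by apply/negbTE; apply: contraFN eE; apply: (subsetP qE).
  by rewrite /= nbb ?code_lt // ed_code.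
rewrite map_f // H //; apply/allP => x _; apply/eqP.
rewrite -(eqP (vq x)) vcard //; apply: eq_in_count => i.
by rewrite mem_iota add0n => /= im; rewrite nbb.
Qed.

Hypothesis HPMv : all vcondB PMbits.

Lemma PMj_vcond j : j < p -> [forall x, #|[set e in PMj j | x \in val e]| == 1].
Proof.
move=> jp; apply/forallP => x; rewrite vcard ?PMj_sub // PMjE //.
have /allP/(_ x (HVl x)) H := allP HPMv _ (mem_nth [::] jp).
rewrite (@eq_in_count _ _ (fun i => nth false (nth [::] PMbits j) i && pin x i)) //.
by move=> i; rewrite mem_iota add0n => /= im; rewrite ed_PMset.
Qed.

Lemma card2I (x y : V) (H : {set V}) : x != y ->
  (#|[set x; y] :&: H| == 1) = ((x \in H) != (y \in H)).
Proof.
move=> xy; have u : uniq [seq z <- [:: x; y] | z \in H] by rewrite filter_uniq //= inE xy.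
have -> : #|[set x; y] :&: H| = #|[seq z <- [:: x; y] | z \in H]|.
  by apply: eq_card => z; rewrite !inE mem_filter !inE andbC.
by rewrite (card_uniqP u) /=; case: (x \in H); case: (y \in H).
Qed.

Lemma bip_ed (c : Ct V) (H : {set V}) i : val c = [set H; ~: H] -> i < m ->
  bip_edge c (ed i) = ((a i \in H) != (b i \in H)).
Proof.
move=> vc im; rewrite /bip_edge vc val_ed //.
apply/forall_inP/idP => [/(_ H)|hab P].
  by rewrite in_set2 eqxx card2I ?ab_neq //; apply.
rewrite in_set2 => /orP [] /eqP ->; rewrite card2I ?ab_neq //.
by rewrite !inE; case: (a i \in H) hab; case: (b i \in H).
Qed.

Definition Sc (c : Ct V) : seq nat := [seq j <- iota 0 p | [forall e in PMj j, bip_edge c e]].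
Definition hbit (hb : seq bool) x := nth false hb (index x Vl).
Definition ScB (hb : seq bool) : seq nat :=
  [seq j <- iota 0 p | all (fun i => nth false (nth [::] PMbits j) i ==>
                                     (hbit hb (a i) != hbit hb (b i))) (iota 0 m)].
Variable Slist : seq (seq nat).
Hypothesis HSc : all (fun hb => (count id hb == (size Vl)./2) ==> (ScB hb \in Slist))
                     (allbits (size Vl)).

Lemma cardV : #|V| = size Vl.
Proof. by rewrite (@card_list _ Vl predT) // count_predT. Qed.

Lemma Sc_in (c : Ct V) : Sc c \in Slist.
Proof.
case: c => cc Hc; have /existsP[H /andP[/eqP vc hH]] := Hc.
set hb := [seq x \in H | x <- Vl].
have hbE x : hbit hb x = (x \in H).
  by rewrite /hbit (nth_map x) ?nth_index ?index_mem ?HVl.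
have cH : count id hb = (size Vl)./2.
  rewrite count_map -(@card_list _ Vl (mem H)) //.
  by rewrite -cardV -(eqP hH) doubleK.
have := allP HSc hb (allbitsP (size_map _ _)); rewrite cH eqxx /= => HS.
set c := exist _ cc Hc; have vc' : val c = [set H; ~: H] by [].
suff -> : Sc c = ScB hb by [].
apply: eq_in_filter => j; rewrite mem_iota add0n /= => jp.
apply/forall_inP/allP => [Hf i|Ha e eP].
  rewrite mem_iota add0n /= => im; apply/implyP => bit.
  rewrite !hbE -(@bip_ed c H i vc' im); apply: Hf; rewrite PMjE // ed_PMset //.
have eE : e \in Eg by apply: (subsetP (PMj_sub j)).
have cm := code_lt eE; rewrite -(ed_code eE) (@bip_ed c H _ vc' cm) -!hbE.
have := Ha _ (_ : code e \in iota 0 m); rewrite mem_iota add0n cm => /(_ isT)/implyP; apply.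
by move: eP; rewrite -{1}(ed_code eE) PMjE // ed_PMset.
Qed.

Variable facts : seq (seq nat).
Variable gens : seq (seq nat * nat).
Variable ws : seq (seq nat).
Let g0 := ([::] : seq nat, 0).
Let bit j i := nth false (nth [::] PMbits j) i.
Hypothesis Hfacts : all (fun F => all (fun x => x < p) F &&
   all (fun i => sumn [seq (bit x i : nat) | x <- F] == 1) (iota 0 m)) facts.
Hypothesis Hgens : all (fun g => all (fun x => x < p) g.1 && (size g.1 == 3 * g.2)) gens.
Lemma gens_lt' g : g \in gens -> all (fun x => x < p) g.1.
Proof. by move/(allP Hgens)/andP=> []. Qed.
Hypothesis Hrep : forall (n : nat -> nat) k,
  (forall i, i < m -> \sum_(j < p) n j * bit j i = k) ->
  exists coef : nat -> nat,
    (forall j, j < p -> n j = \sum_(t < size gens) coef t * count_mem j (nth g0 gens t).1) /\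
    k = \sum_(t < size gens) coef t * (nth g0 gens t).2.
Hypothesis Hdeg : all (fun x => count (pin x) (iota 0 m) == 3) Vl.

Definition masks : seq bitseq :=
  [:: [:: true; false; false]; [:: false; true; false]; [:: false; false; true];
      [:: true; true; false]; [:: true; false; true]; [:: false; true; true];
      [:: true; true; true]].
Definition NT (A : seq (seq nat)) (mk : bitseq) (j : nat) : bool :=
  has (fun B => j \in B) (mask mk A).
Variable factsP : seq (seq nat).
Hypothesis HfP : all (fun s => has (fun F => perm_eq s F) facts) factsP.
Definition integral (A : seq (seq nat)) : bool :=
  has (fun s => all2 (fun x B => x \in B) s A) factsP.
Definition certW (w : seq nat) :=
  sumn [seq nth 0 w t * count id (nth [::] masks t) | t <- iota 0 7].
Definition cert (A : seq (seq nat)) (w : seq nat) : bool :=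
  all (fun g => sumn [seq nth 0 w t * count (NT A (nth [::] masks t)) g.1 | t <- iota 0 7]
                < g.2 * certW w) gens.
Definition check A := integral A || has (cert A) ws.
Definition NTl (A : seq (seq nat)) t := [seq NT A (nth [::] masks t) j | j <- iota 0 p].
Definition checkF A := integral A ||
  (let NTs := [seq NTl A t | t <- iota 0 7] in
   let Gc := [seq (g.2, [seq count (nth false (nth [::] NTs t)) g.1 | t <- iota 0 7]) | g <- gens] in
   has (fun w => let W := certW w in
      all (fun gc => sumn [seq nth 0 w t * nth 0 gc.2 t | t <- iota 0 7] < gc.1 * W) Gc) ws).

Lemma checkF_check A : checkF A -> check A.
Proof.
rewrite /check; case/orP => [-> //|/hasP [w wws Hw]]; apply/orP; right; apply/hasP; exists w => //.
apply/allP => g gG; have gl := gens_lt' gG.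
have := allP Hw _ (map_f (fun g => (g.2, [seq count (nth false (nth [::] [seq NTl A t | t <- iota 0 7] t)) g.1 | t <- iota 0 7])) gG).
have E t : t < 7 -> count (NT A (nth [::] masks t)) g.1 =
    count (nth false (nth [::] [seq NTl A t | t <- iota 0 7] t)) g.1.
  move=> t7; apply: eq_in_count => x xg.
  by rewrite (nth_map 0) ?size_iota ?nth_iota // /NTl (nth_map 0) ?size_iota ?nth_iota ?(allP gl).
rewrite /= (E 0) // (E 1) // (E 2) // (E 3) // (E 4) // (E 5) // (E 6) //.
Qed.
Hypothesis Hcheck :
  all (fun A1 => all (fun A2 => all (fun A3 => checkF [:: A1; A2; A3]) Slist) Slist) Slist.

Lemma le_vsum (s : seq (vec V)) w x : w \in s -> w x <= vsum s x.
Proof. by move=> ws'; rewrite /vsum ffunE (big_rem w) //= leq_addr. Qed.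

Lemma Sc_lt c j : j \in Sc c -> j < p.
Proof. by rewrite mem_filter mem_iota add0n => /andP[]. Qed.

Lemma regE : regular Eg.
Proof.
exists 3 => x; rewrite (@card_E (mem [set e in Eg | x \in val e])); last first.
  by move=> e He; have : e \in [set e in Eg | x \in val e] := He; rewrite inE => /andP[].
rewrite -(eqP (allP Hdeg x (HVl x))); apply: eq_in_count => i.
by rewrite mem_iota add0n => /= im; rewrite inE ed_in // in_ed.
Qed.

Lemma gens_lt t : t < size gens -> all (fun x => x < p) (nth g0 gens t).1.
Proof. by move=> tl; have /andP[] := allP Hgens _ (mem_nth g0 tl). Qed.

Lemma rep_sum (n coef : nat -> nat) (G : nat -> nat) :
  (forall j, j < p -> n j = \sum_(t < size gens) coef t * count_mem j (nth g0 gens t).1) ->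
  \sum_(j < p) n j * G j = \sum_(t < size gens) coef t * \sum_(x <- (nth g0 gens t).1) G x.
Proof.
move=> Hn.
rewrite (eq_bigr (fun j : 'I_p => \sum_(t < size gens)
           coef t * (count_mem (j : nat) (nth g0 gens t).1 * G j))); last first.
  by move=> j _; rewrite Hn // big_distrl; apply: eq_bigr => t _; rewrite mulnA.
rewrite exchange_big; apply: eq_bigr => t _; rewrite -big_distrr /=; congr (_ * _).
by rewrite (sumN G (gens_lt (ltn_ord t))).
Qed.

Theorem Bfact : B_factorizable Eg.
Proof.
split; first exact: regE.
move=> v [k [k1 [s [Hs Hv]]]] Hve.
have Hw : forall w, w \in s -> exists x : nat * Ct V, (x.1 \in Sc x.2) /\ w = chiEc (PMj x.1) x.2.
  move=> w ws'; case: (Hs w ws') => c [q [/andP[/forall_inP bq vq] wE]]; rewrite wE.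
  have qE : q \subset Eg.
    apply/subsetP => e eq.
    have := le_vsum (inl e) ws'; rewrite -Hv wE /vscale /chiEc !ffunE Hve eq.
    by case: (e \in Eg); rewrite ?muln0.
  have qP := pm_in qE vq.
  exists (index q PMs, c); split; last by rewrite /PMj nth_index.
  rewrite mem_filter mem_iota add0n /=; apply/andP; split.
    by apply/forall_inP; rewrite /PMj nth_index.
  by have := index_mem q PMs; rewrite qP size_map.
case: (lift_list Hw) => L [HL sL].
have vsE x : vsum s x = \sum_(l <- L) chiEc (PMj l.1) l.2 x by rewrite sL /vsum ffunE big_map.
have Lp : all (fun x => x < p) (map fst L).
  by rewrite all_map; apply/allP => l /(allP HL); apply: Sc_lt.
pose n j := count_mem j (map fst L).
have edgeq : forall i, i < m -> \sum_(j < p) n j * bit j i = k.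
  move=> i im; have := congr1 (fun f : vec V => f (inl (ed i))) Hv.
  rewrite /vscale ffunE Hve ed_in // muln1 vsE => ->.
  rewrite (eq_bigr (fun l => (ed i \in PMj l.1) : nat)); last by move=> l _; rewrite ffunE.
  rewrite -(big_map fst xpredT (fun j => (ed i \in PMj j) : nat)) (sumN _ Lp).
  by apply: eq_bigr => j _; rewrite PMjE // ed_PMset.
case: (Hrep edgeq) => coef [Hn Hk].
have cq c : k * v (inr c) = count_mem c (map snd L).
  have := congr1 (fun f : vec V => f (inr c)) Hv; rewrite /vscale ffunE vsE => ->.
  by rewrite count_map -sumB; apply: eq_bigr => l _; rewrite /chiEc ffunE eq_sym.
have tot : \sum_c v (inr c) = 3.
  have sL3 : size L = 3 * k.
    have -> : size L = \sum_(j < p) n j * 1.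
      by rewrite -(sumN (fun _ => 1) Lp) sum1_size size_map.
    rewrite (@rep_sum n coef (fun _ => 1) Hn) Hk big_distrr; apply: eq_bigr => t _ /=.
    rewrite sum1_size; have/andP[_ /eqP->] := allP Hgens _ (mem_nth g0 (ltn_ord t)).
    by rewrite mulnCA.
  apply/eqP; rewrite -(eqn_pmul2l k1) big_distrr /=.
  rewrite (eq_bigr (fun c => count_mem c (map snd L))); last by move=> c _; rewrite cq.
  by rewrite sum_fin_size size_map sL3 mulnC.
case: (vec_decomp tot) => cs [size3 Hcs].
case: cs size3 Hcs => [|c1 [|c2 [|c3 [|]]]] // _ Hcs.
have chk : check [:: Sc c1; Sc c2; Sc c3].
  exact/checkF_check/(allP (allP (allP Hcheck _ (Sc_in c1)) _ (Sc_in c2)) _ (Sc_in c3)).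
set cs := [:: c1; c2; c3].
have Hcs' c : v (inr c) = count_mem c cs by rewrite Hcs.
clear Hcs.
case/orP: chk => [integ | /hasP [w wws cw]]; last first.
  exfalso; pose A := map Sc cs.
  have Hall t : t < 7 ->
      k * count id (nth [::] masks t) <= \sum_(j < p) n j * NT A (nth [::] masks t) j.
    move=> t7; set mk := nth [::] masks t.
    have smk : size mk = size cs.
      have : all (fun m => size m == 3) masks by [].
      by move/allP/(_ mk (@mem_nth _ [::] masks t t7))/eqP.
    set X := mask mk cs.
    have e1 : count id mk = size X by rewrite size_mask.
    have e2 : size X <= count (mem X) cs.
      have <- : count (mem X) X = size X by apply/eqP; rewrite -all_count; apply/allP.
      exact: leq_count_subseq (mask_subseq _ _).
    have e3 : k * count (mem X) cs = count (fun l => l.2 \in X) L.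
      have -> : count (fun l => l.2 \in X) L = count (mem X) (map snd L) by rewrite count_map.
      rewrite !sum_fin_count big_distrr /=.
      by apply: eq_bigr => c _; rewrite -cq Hcs'.
    have e4 : count (fun l => l.2 \in X) L <= count (fun l => NT A mk l.1) L.
      apply: sub_in_count; apply/allP => l lL; apply/implyP => lX.
      rewrite /NT /A -map_mask has_map; apply/hasP; exists l.2 => //.
      exact: (allP HL l lL).
    have e5 : count (fun l => NT A mk l.1) L = \sum_(j < p) n j * NT A mk j.
      rewrite -(count_map fst (NT A mk)) -sumB (sumN _ Lp).
      by apply: eq_bigr => j _.
    rewrite e1 -e5; apply: leq_trans e4; rewrite -e3 leq_mul2l e2 orbT.
    done.
  pose Wt t := nth 0 w t; pose mk t := nth [::] masks t.
  pose G j := \sum_(t <- iota 0 7) Wt t * NT A (mk t) j.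
  pose X i := \sum_(x <- (nth g0 gens i).1) G x.
  have K1 : k * certW w <= \sum_(j < p) n j * G j.
    rewrite /certW sumn_big big_distrr.
    rewrite (eq_bigr (fun j : 'I_p => \sum_(t <- iota 0 7) n j * (Wt t * NT A (mk t) j)));
      last by move=> j _; rewrite big_distrr.
    rewrite exchange_big /= !big_seq; apply: leq_sum => t.
    move=> ti; have t7 : t < 7 by move: ti; rewrite -[[:: 0; 1; 2; 3; 4; 5; 6]]/(iota 0 7) mem_iota.
    rewrite (eq_bigr (fun j : 'I_p => Wt t * (n j * NT A (mk t) j))); last first.
      by move=> j _; rewrite mulnCA.
    by rewrite -big_distrr /= mulnCA leq_mul2l Hall ?orbT.
  have K2 : \sum_(j < p) n j * G j = \sum_(i < size gens) coef i * X i := rep_sum G Hn.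
  have XE i : i < size gens ->
      X i = sumn [seq nth 0 w t * count (NT A (nth [::] masks t)) (nth g0 gens i).1 | t <- iota 0 7].
    move=> il; rewrite sumn_big /X /G exchange_big; apply: eq_bigr => t _.
    by rewrite -big_distrr sumB.
  have K3 : \sum_(i < size gens) coef i * X i + \sum_(i < size gens) coef i <= k * certW w.
    rewrite Hk big_distrl -big_split; apply: leq_sum => i _ /=.
    rewrite -mulnSr -mulnA leq_mul2l; apply/orP; right.
    by rewrite XE //; have := allP cw _ (mem_nth g0 (ltn_ord i)).
  have K4 : 0 < \sum_(i < size gens) coef i.
    rewrite lt0n; apply: contraTneq k1 => /eqP; rewrite sum_nat_eq0 => /forall_inP H0.
    by rewrite Hk big1 // => i _; rewrite (eqP (H0 i isT)).
  have := leq_trans K3 (leq_trans K1 (eq_leq K2)).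
  by rewrite -{2}(addn0 (\sum_(i < size gens) coef i * X i)) leq_add2l leqNgt K4.
case/hasP: integ => sg sgP hall.
have /hasP[F Ff pσ] := allP HfP sg sgP.
have hall' : all2 (fun x B => x \in B) sg (map Sc cs) := hall.
have sσ : size sg = 3 by move: hall; rewrite all2E => /andP[/eqP ->].
have /andP[Fp /allP Fs] := allP Hfacts F Ff.
exists [seq chiEc (PMj l.1) l.2 | l <- zip sg cs]; split.
  move=> w' /mapP [l lz ->].
  have lS : l.1 \in Sc l.2 := all2_zip hall' lz.
  exists l.2, (PMj l.1); split => //; apply/andP; split.
    by move: lS; rewrite mem_filter => /andP[].
  exact: PMj_vcond (Sc_lt lS).
apply/ffunP => -[e|c]; rewrite /vsum ffunE big_map.
  rewrite Hve (eq_bigr (fun l => (e \in PMj l.1) : nat)); last by move=> l _; rewrite /chiEc ffunE.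
  rewrite -(big_map fst xpredT (fun x => (e \in PMj x) : nat)).
  rewrite -/(unzip1 _) unzip1_zip ?sσ // (perm_big _ pσ) /=.
  case eE: (e \in Eg).
    have im := code_lt eE.
    transitivity (\sum_(x <- F) (bit x (code e) : nat)).
      by rewrite -sumn_big; apply/esym/eqP/Fs; rewrite mem_iota add0n im.
    apply: eq_big_seq => x xF.
    by rewrite PMjE ?(allP Fp) // /bit -(ed_PMset _ im) ed_code.
  rewrite big1_seq // => x _; apply/eqP; rewrite eqb0; apply: contraFN eE.
  exact: (subsetP (PMj_sub x)).
rewrite Hcs' (eq_bigr (fun l => (l.2 == c) : nat)); last first.
  by move=> l _; rewrite /chiEc ffunE eq_sym.
rewrite -(big_map snd xpredT (fun y => (y == c) : nat)).
by rewrite -/(unzip2 _) unzip2_zip ?sσ // sumB.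
Qed.
End Bridge.

Ltac conv_lia := repeat match goal with H : context [addn] |- _ => unfold addn in H | H : context [subn] |- _ => unfold subn in H | H : context [muln] |- _ => unfold muln in H end; (try unfold addn); (try unfold subn); (try unfold muln); lia.
Definition cube_Vl : seq cubeV := [:: ((false,false),false); ((false,false),true); ((false,true),false); ((false,true),true); ((true,false),false); ((true,false),true); ((true,true),false); ((true,true),true)].
Definition cube_El : seq (cubeV * cubeV) := [:: (((false,false),false), ((false,false),true)); (((false,false),false), ((false,true),false)); (((false,false),false), ((true,false),false)); (((false,false),true), ((false,true),true)); (((false,false),true), ((true,false),true)); (((false,true),false), ((false,true),true)); (((false,true),false), ((true,true),false)); (((false,true),true), ((true,true),true)); (((true,false),false), ((true,false),true)); (((true,false),false), ((true,true),false)); (((true,false),true), ((true,true),true)); (((true,true),false), ((true,true),true))].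
Definition cube_PMbits : seq (seq bool) := [:: [:: true; false; false; false; false; true; false; false; true; false; false; true];
  [:: true; false; false; false; false; true; false; false; false; true; true; false];
  [:: true; false; false; false; false; false; true; true; true; false; false; false];
  [:: false; true; false; true; false; false; false; false; true; false; false; true];
  [:: false; true; false; true; false; false; false; false; false; true; true; false];
  [:: false; true; false; false; true; false; false; true; false; true; false; false];
  [:: false; false; true; true; false; false; true; false; false; false; true; false];
  [:: false; false; true; false; true; true; false; false; false; false; false; true];
  [:: false; false; true; false; true; false; true; true; false; false; false; false]].
Definition cube_Slist : seq (seq nat) := [:: [:: ];
  [:: 0];
  [:: 0; 1; 2];
  [:: 0; 1; 2; 3; 4; 5; 6; 7; 8];
  [:: 0; 1; 3; 4];
  [:: 0; 1; 7];
  [:: 0; 2; 3];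
  [:: 0; 2; 7; 8];
  [:: 0; 3; 7];
  [:: 1];
  [:: 1; 4; 5];
  [:: 1; 4; 6];
  [:: 2];
  [:: 2; 5; 8];
  [:: 2; 6; 8];
  [:: 3];
  [:: 3; 4; 5];
  [:: 3; 4; 6];
  [:: 4];
  [:: 4; 5; 6; 8];
  [:: 5];
  [:: 5; 7; 8];
  [:: 6];
  [:: 6; 7; 8];
  [:: 7];
  [:: 8]].
Definition cube_facts : seq (seq nat) := [:: [:: 0; 4; 8]; [:: 0; 5; 6]; [:: 1; 3; 8]; [:: 2; 4; 7]].
Definition cube_factsP : seq (seq nat) := [:: [:: 0; 4; 8]; [:: 0; 8; 4]; [:: 4; 0; 8]; [:: 4; 8; 0]; [:: 8; 0; 4]; [:: 8; 4; 0]; [:: 0; 5; 6]; [:: 0; 6; 5]; [:: 5; 0; 6]; [:: 5; 6; 0]; [:: 6; 0; 5]; [:: 6; 5; 0]; [:: 1; 3; 8]; [:: 1; 8; 3]; [:: 3; 1; 8]; [:: 3; 8; 1]; [:: 8; 1; 3]; [:: 8; 3; 1]; [:: 2; 4; 7]; [:: 2; 7; 4]; [:: 4; 2; 7]; [:: 4; 7; 2]; [:: 7; 2; 4]; [:: 7; 4; 2]].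
Definition cube_gens : seq (seq nat * nat) := [:: ([:: 0; 4; 8], 1); ([:: 0; 5; 6], 1); ([:: 1; 3; 8], 1); ([:: 2; 4; 7], 1); ([:: 1; 2; 3; 5; 6; 7], 2)].
Definition prism_Vl : seq prismV := [:: (false, @Ordinal 5 0 isT); (false, @Ordinal 5 1 isT); (false, @Ordinal 5 2 isT); (false, @Ordinal 5 3 isT); (false, @Ordinal 5 4 isT); (true, @Ordinal 5 0 isT); (true, @Ordinal 5 1 isT); (true, @Ordinal 5 2 isT); (true, @Ordinal 5 3 isT); (true, @Ordinal 5 4 isT)].
Definition prism_El : seq (prismV * prismV) := [:: ((false, @Ordinal 5 0 isT), (false, @Ordinal 5 1 isT)); ((false, @Ordinal 5 0 isT), (false, @Ordinal 5 4 isT)); ((false, @Ordinal 5 0 isT), (true, @Ordinal 5 0 isT)); ((false, @Ordinal 5 1 isT), (false, @Ordinal 5 2 isT)); ((false, @Ordinal 5 1 isT), (true, @Ordinal 5 1 isT)); ((false, @Ordinal 5 2 isT), (false, @Ordinal 5 3 isT)); ((false, @Ordinal 5 2 isT), (true, @Ordinal 5 2 isT)); ((false, @Ordinal 5 3 isT), (false, @Ordinal 5 4 isT)); ((false, @Ordinal 5 3 isT), (true, @Ordinal 5 3 isT)); ((false, @Ordinal 5 4 isT), (true, @Ordinal 5 4 isT)); ((true, @Ordinal 5 0 isT), (true, @Ordinal 5 1 isT)); ((true, @Ordinal 5 0 isT), (true, @Ordinal 5 4 isT)); ((true, @Ordinal 5 1 isT), (true, @Ordinal 5 2 isT)); ((true,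 @Ordinal 5 2 isT), (true, @Ordinal 5 3 isT)); ((true, @Ordinal 5 3 isT), (true, @Ordinal 5 4 isT))].
Definition prism_PMbits : seq (seq bool) := [:: [:: true; false; false; false; false; true; false; false; false; true; true; false; false; true; false];
  [:: true; false; false; false; false; false; true; true; false; false; true; false; false; false; true];
  [:: true; false; false; false; false; false; true; false; true; true; true; false; false; false; false];
  [:: false; true; false; true; false; false; false; false; true; false; false; true; true; false; false];
  [:: false; true; false; false; true; true; false; false; false; false; false; true; false; true; false];
  [:: false; true; false; false; true; false; true; false; true; false; false; true; false; false; false];
  [:: false; false; true; true; false; false; false; true; false; false; false; false; true; false; true];
  [:: false; false; true; true; false; false; false; false; true; true; false; false; true; false; false];
  [:: false; false; true; false; true; true; false; false; false; true; false; false; false; true; false];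
  [:: false; false; true; false; true; false; true; true; false; false; false; false; false; false; true];
  [:: false; false; true; false; true; false; true; false; true; true; false; false; false; false; false]].
Definition prism_Slist : seq (seq nat) := [:: [:: ];
  [:: 0];
  [:: 0; 1; 2];
  [:: 0; 1; 2; 4; 5; 8; 9; 10];
  [:: 0; 1; 2; 6; 7; 8; 9; 10];
  [:: 0; 2];
  [:: 0; 2; 3; 4; 5; 7; 8; 10];
  [:: 0; 2; 8; 10];
  [:: 0; 4; 8];
  [:: 0; 8];
  [:: 1];
  [:: 1; 2];
  [:: 1; 2; 3; 5; 6; 7; 9; 10];
  [:: 1; 2; 9; 10];
  [:: 1; 6; 9];
  [:: 1; 9];
  [:: 2];
  [:: 2; 5; 10];
  [:: 2; 7; 10];
  [:: 3];
  [:: 3; 4; 5];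
  [:: 3; 4; 5; 6; 7; 8; 9; 10];
  [:: 3; 5];
  [:: 3; 5; 7; 10];
  [:: 3; 6; 7];
  [:: 3; 7];
  [:: 4];
  [:: 4; 5];
  [:: 4; 5; 8; 10];
  [:: 4; 8];
  [:: 5];
  [:: 5; 9; 10];
  [:: 6];
  [:: 6; 7];
  [:: 6; 7; 9; 10];
  [:: 6; 9];
  [:: 7];
  [:: 7; 8; 10];
  [:: 8];
  [:: 8; 9; 10];
  [:: 9];
  [:: 10]].
Definition prism_facts : seq (seq nat) := [:: [:: 0; 3; 9]; [:: 0; 5; 6]; [:: 1; 3; 8]; [:: 1; 4; 7]; [:: 2; 4; 6]].
Definition prism_factsP : seq (seq nat) := [:: [:: 0; 3; 9]; [:: 0; 9; 3]; [:: 3; 0; 9]; [:: 3; 9; 0]; [:: 9; 0; 3]; [:: 9; 3; 0]; [:: 0; 5; 6]; [:: 0; 6; 5]; [:: 5; 0; 6]; [:: 5; 6; 0]; [:: 6; 0; 5]; [:: 6; 5; 0]; [:: 1; 3; 8]; [:: 1; 8; 3]; [:: 3; 1; 8]; [:: 3; 8; 1]; [:: 8; 1; 3]; [:: 8; 3; 1]; [:: 1; 4; 7]; [:: 1; 7; 4]; [:: 4; 1; 7]; [:: 4; 7; 1]; [:: 7; 1; 4]; [:: 7; 4; 1]; [:: 2; 4; 6]; [:: 2; 6; 4]; [:: 4; 2; 6]; [:: 4; 6; 2]; [:: 6; 2; 4]; [:: 6; 4; 2]].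
Definition prism_gens : seq (seq nat * nat) := [:: ([:: 0; 3; 9], 1); ([:: 0; 5; 6], 1); ([:: 1; 3; 8], 1); ([:: 1; 4; 7], 1); ([:: 2; 4; 6], 1); ([:: 0; 1; 3; 4; 6; 10], 2)].
Definition ws7 : seq (seq nat) := [:: [:: 1; 0; 0; 0; 0; 0; 0]; [:: 0; 1; 0; 0; 0; 0; 0]; [:: 0; 0; 1; 0; 0; 0; 0]; [:: 0; 0; 0; 1; 0; 0; 0]; [:: 0; 0; 0; 0; 1; 0; 0]; [:: 0; 0; 0; 0; 0; 1; 0]; [:: 0; 0; 0; 0; 0; 0; 1]; [:: 1; 0; 0; 0; 0; 0; 1]; [:: 0; 1; 0; 0; 0; 0; 1]; [:: 0; 0; 1; 0; 0; 0; 1]; [:: 0; 0; 0; 1; 0; 0; 1]; [:: 0; 0; 0; 0; 1; 0; 1]; [:: 0; 0; 0; 0; 0; 1; 1]].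

Lemma cube_rep : forall (n : nat -> nat) (k : nat),
 (forall i, i < size cube_El -> \sum_(j < size cube_PMbits) n j * (fun j0 : nat => [eta nth false (nth [::] cube_PMbits j0)]) j i = k) ->
 exists coef : nat -> nat,
   (forall j, j < size cube_PMbits -> n j = \sum_(t < size cube_gens) coef t * count_mem j (nth ([::] : seq nat, 0) cube_gens t).1) /\
   k = \sum_(t < size cube_gens) coef t * (nth ([::] : seq nat, 0) cube_gens t).2.
Proof.
move=> n k H.
have h i : i < 12 -> \sum_(j < 9) n j * nth false (nth [::] cube_PMbits j) i = k := H i.
move: (h 0 isT) (h 1 isT) (h 2 isT) (h 3 isT) (h 4 isT) (h 5 isT) (h 6 isT) (h 7 isT) (h 8 isT) (h 9 isT) (h 10 isT) (h 11 isT).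
rewrite !big_ord_recr !big_ord0 /=.
move=> h0 h1 h2 h3 h4 h5 h6 h7 h8 h9 h10 h11.
clear h H.
case: (leqP (n 5) (n 0)) => /leP c.
  exists (fun t => nth 0 [:: n 0 - n 5; n 5; n 1; n 2; 0] t); split; last first.
    by rewrite !big_ord_recr !big_ord0 /=; conv_lia.
  move=> j; do 9 (case: j => [|j]; [by move=> _; rewrite !big_ord_recr !big_ord0 /=; conv_lia|]).
  by [].

  exists (fun t => nth 0 [:: 0; n 0; n 1 - (n 5 - n 0); n 2 - (n 5 - n 0); n 5 - n 0] t); split; last first.
    by rewrite !big_ord_recr !big_ord0 /=; conv_lia.
  move=> j; do 9 (case: j => [|j]; [by move=> _; rewrite !big_ord_recr !big_ord0 /=; conv_lia|]).
  by [].
Qed.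

Lemma prism_rep : forall (n : nat -> nat) (k : nat),
 (forall i, i < size prism_El -> \sum_(j < size prism_PMbits) n j * (fun j0 : nat => [eta nth false (nth [::] prism_PMbits j0)]) j i = k) ->
 exists coef : nat -> nat,
   (forall j, j < size prism_PMbits -> n j = \sum_(t < size prism_gens) coef t * count_mem j (nth ([::] : seq nat, 0) prism_gens t).1) /\
   k = \sum_(t < size prism_gens) coef t * (nth ([::] : seq nat, 0) prism_gens t).2.
Proof.
move=> n k H.
have h i : i < 15 -> \sum_(j < 11) n j * nth false (nth [::] prism_PMbits j) i = k := H i.
move: (h 0 isT) (h 1 isT) (h 2 isT) (h 3 isT) (h 4 isT) (h 5 isT) (h 6 isT) (h 7 isT) (h 8 isT) (h 9 isT) (h 10 isT) (h 11 isT) (h 12 isT) (h 13 isT) (h 14 isT).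
rewrite !big_ord_recr !big_ord0 /=.
move=> h0 h1 h2 h3 h4 h5 h6 h7 h8 h9 h10 h11 h12 h13 h14.
clear h H.

  exists (fun t => nth 0 [:: n 9; n 5; n 8; n 7; n 2; n 10] t); split; last first.
    by rewrite !big_ord_recr !big_ord0 /=; conv_lia.
  move=> j; do 11 (case: j => [|j]; [by move=> _; rewrite !big_ord_recr !big_ord0 /=; conv_lia|]).
  by [].
Qed.

Definition cx0 : cubeV := ((false,false),false).
Definition px0 : prismV := (false, @Ordinal 5 0 isT).

Lemma cube_HVl (x : cubeV) : x \in cube_Vl.
Proof. by case: x => [[[] []] []]. Qed.

Lemma prism_HVl (x : prismV) : x \in prism_Vl.
Proof.
case: x => s [i Hi]; case: s; do 5 (case: i Hi => [|i] Hi; [by []|]); by [].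
Qed.

Lemma cube_e0P : #|([set ((false,false),false); ((false,false),true)] : {set cubeV})| == 2.
Proof. by rewrite cards2. Qed.
Definition cube_e0 : Kt cubeV := @exist {set cubeV} (fun e => #|e| == 2) _ cube_e0P.
Lemma prism_e0P : #|([set (false, @Ordinal 5 0 isT); (true, @Ordinal 5 0 isT)] : {set prismV})| == 2.
Proof. by rewrite cards2. Qed.
Definition prism_e0 : Kt prismV := @exist {set prismV} (fun e => #|e| == 2) _ prism_e0P.

Lemma cube_HEl2 : forall x y, cube_adj x y ->
  has (fun p => ((p.1 == x) && (p.2 == y)) || ((p.1 == y) && (p.2 == x))) cube_El.
Proof.
move=> x y.
have H : all (fun x => all (fun y => cube_adj x y ==>
   has (fun p => ((p.1 == x) && (p.2 == y)) || ((p.1 == y) && (p.2 == x))) cube_El) cube_Vl) cube_Vl.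
  by vm_compute.
exact/implyP/(allP (allP H x (cube_HVl x)) y (cube_HVl y)).
Qed.

Lemma prism_HEl2 : forall x y, prism_adj x y ->
  has (fun p => ((p.1 == x) && (p.2 == y)) || ((p.1 == y) && (p.2 == x))) prism_El.
Proof.
move=> x y.
have H : all (fun x => all (fun y => prism_adj x y ==>
   has (fun p => ((p.1 == x) && (p.2 == y)) || ((p.1 == y) && (p.2 == x))) prism_El) prism_Vl) prism_Vl.
  by vm_compute.
exact/implyP/(allP (allP H x (prism_HVl x)) y (prism_HVl y)).
Qed.

Lemma cube_HElcode : forall i, i < size cube_El ->
  find (fun p => pin cube_El cx0 p.1 i && pin cube_El cx0 p.2 i) cube_El = i.
Proof.
have H : all (fun i => find (fun p => pin cube_El cx0 p.1 i && pin cube_El cx0 p.2 i) cube_El == i)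
   (iota 0 (size cube_El)) by vm_compute.
by move=> i im; apply/eqP/(allP H); rewrite mem_iota.
Qed.

Lemma prism_HElcode : forall i, i < size prism_El ->
  find (fun p => pin prism_El px0 p.1 i && pin prism_El px0 p.2 i) prism_El = i.
Proof.
have H : all (fun i => find (fun p => pin prism_El px0 p.1 i && pin prism_El px0 p.2 i) prism_El == i)
   (iota 0 (size prism_El)) by vm_compute.
by move=> i im; apply/eqP/(allP H); rewrite mem_iota.
Qed.

Lemma cube_B : B_factorizable cube_edges.
Proof.
refine (@Bfact cubeV cube_adj cube_Vl cube_HVl _ cube_El cube_e0 cx0 _ cube_HEl2 cube_HElcode
  cube_PMbits _ _ cube_Slist _ cube_facts cube_gens ws7 _ _ cube_rep _ cube_factsP _ _);
  vm_compute; reflexivity.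
Qed.

Lemma prism_B : B_factorizable prism_edges.
Proof.
refine (@Bfact prismV prism_adj prism_Vl prism_HVl _ prism_El prism_e0 px0 _ prism_HEl2 prism_HElcode
  prism_PMbits _ _ prism_Slist _ prism_facts prism_gens ws7 _ _ prism_rep _ prism_factsP _ _);
  vm_compute; reflexivity.
Qed.

Theorem mainTheorem9 :
  B_factorizable cube_edges /\ B_factorizable prism_edges.
Proof. exact: (conj cube_B prism_B). Qed.
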